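(* For every integer $n\geq 2$, $$\sum_{k=1}^{n-1}\frac{B_{2k}B_{2n-2k}}{(2k)(2n-2k)}=\sum_{k=1}^{n-1}\frac{B_{2k}B_{2n-2k}}{(2k)(2n-2k)}\binom{2n}{2k}+\frac{B_{2n}}{n}H_{2n}.$$
   Context: $B_n$ denotes the Bernoulli numbers, defined by $\frac{x}{e^x-1}=\sum_{n\ge 0}B_n\frac{x^n}{n!}$ (so $B_0=1$, $B_2=1/6$, $B_4=-1/30,\dots$). $H_i=\sum_{j=1}^i \frac1j$ is the $i$-th harmonic number. *)

(* Defs.v *)
From mathcomp Require Import all_boot all_algebra.
Set Implicit Arguments. Unset Strict Implicit. Unset Printing Implicit Defensive.
Import GRing.Theory Num.Theory.
Local Open Scope ring_scope.

(* Bernoulli numbers with x/(e^x-1) = sum B_n x^n/n! (so B_1 = -1/2),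
   characterized by B_0 = 1 and sum_{j=0}^{m} C(m+1,j) B_j = 0 for m >= 1.
   bern_seq m = [:: B_0; ...; B_m]. *)
Fixpoint bern_seq (m : nat) : seq rat :=
  match m with
  | 0 => [:: 1]
  | m'.+1 =>
      let s := bern_seq m' in
      rcons s (- (m'.+2%:R)^-1 *
               \sum_(j < m'.+1) ('C(m'.+2, j))%:R * nth 0 s j)
  end.

Definition bernoulli (n : nat) : rat := nth 0 (bern_seq n) n.

Definition harmonic (i : nat) : rat := \sum_(1 <= j < i.+1) (j%:R)^-1.

(* Main.v *)
Require Import Defs.
From mathcomp Require Import all_boot all_algebra.
From mathcomp Require Import ring lra zify.
Import GRing.Theory Num.Theory.
Local Open Scope ring_scope.

Lemma size_bern_seq m : size (bern_seq m) = m.+1.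
Proof. by elim: m => //= m IH; rewrite size_rcons IH. Qed.

Lemma nth_bern_seq m j : (j <= m)%N -> nth 0 (bern_seq m) j = bernoulli j.
Proof.
rewrite /bernoulli; elim: m => [|m IH] hj.
  by rewrite leqn0 in hj; rewrite (eqP hj).
rewrite leq_eqVlt in hj; case/orP: hj => [/eqP -> //|hj].
by rewrite /= nth_rcons size_bern_seq hj IH.
Qed.

Lemma bern0 : bernoulli 0 = 1. Proof. by []. Qed.

Lemma bern_rec k : \sum_(j < k.+2) ('C(k.+2, j))%:R * bernoulli j = 0.
Proof.
rewrite big_ord_recr /= binSn.
have -> : bernoulli k.+1 = - (k.+2%:R)^-1 *
   \sum_(j < k.+1) ('C(k.+2, j))%:R * bernoulli j.
  rewrite {1}/bernoulli /= nth_rcons size_bern_seq ltnn eqxx.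
  congr (_ * _); apply: eq_bigr => j _; rewrite nth_bern_seq //.
  by rewrite -ltnS.
have h : (k.+2%:R : rat) != 0 by rewrite pnatr_eq0.
by rewrite mulrA mulrN mulfV // mulN1r addrN.
Qed.
Notation R := {poly rat}.
Notation S := {poly {poly rat}}.

Definition eqm (N : nat) (p q : S) := exists r : S, p - q = r * 'X^N.

Lemma eqm_refl N p : eqm N p p.
Proof. by exists 0; rewrite subrr mul0r. Qed.
Lemma eqm_sym N p q : eqm N p q -> eqm N q p.
Proof. by case=> r h; exists (- r); rewrite mulNr -h opprB. Qed.
Arguments eqm_sym {N p q} _.
Lemma eqm_trans N p q r : eqm N p q -> eqm N q r -> eqm N p r.
Proof.
case=> a ha [b hb]; exists (a + b).
by rewrite mulrDl -ha -hb addrA subrK.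
Qed.
Lemma eqm_eq N p q : p = q -> eqm N p q.
Proof. by move=> ->; apply: eqm_refl. Qed.
Lemma eqmD N p q p' q' : eqm N p p' -> eqm N q q' -> eqm N (p + q) (p' + q').
Proof.
case=> a ha [b hb]; exists (a + b).
by rewrite mulrDl -ha -hb; ring.
Qed.
Lemma eqmN N p p' : eqm N p p' -> eqm N (- p) (- p').
Proof. by case=> a ha; exists (- a); rewrite mulNr -ha; ring. Qed.
Lemma eqmB N p q p' q' : eqm N p p' -> eqm N q q' -> eqm N (p - q) (p' - q').
Proof. by move=> h1 h2; apply: eqmD => //; apply: eqmN. Qed.
Lemma eqmM N p q p' q' : eqm N p p' -> eqm N q q' -> eqm N (p * q) (p' * q').
Proof.
case=> a ha [b hb]; exists (a * q + p' * b).
have e1 : p = p' + a * 'X^N by rewrite -ha; ring.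
have e2 : q = q' + b * 'X^N by rewrite -hb; ring.
rewrite e1 e2; ring.
Qed.

Ltac eqm_cong :=
  repeat first [ assumption | apply: eqm_refl | apply: eqmD | apply: eqmB
               | apply: eqmN | apply: eqmM ].

Lemma eqm_coef N (p q : S) : (forall i, (i < N)%N -> p`_i = q`_i) -> eqm N p q.
Proof.
move=> h; exists (drop_poly N (p - q)).
rewrite -{1}(poly_take_drop N (p - q)).
suff -> : take_poly N (p - q) = 0 by rewrite add0r.
apply/polyP => i; rewrite coef_take_poly coef0 coefB.
by case: ifP => // /h ->; rewrite subrr.
Qed.

Lemma eqm_coefE N (p q : S) i : eqm N p q -> (i < N)%N -> p`_i = q`_i.
Proof.
case=> r h hi; apply/eqP; rewrite -subr_eq0 -coefB h coefMXn hi //.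
Qed.

Definition sc (w : R) (p : S) : S := p \Po (w%:P * 'X).
Lemma coef_sc w (p : S) i : (sc w p)`_i = w ^+ i * p`_i.
Proof.
rewrite /sc coef_comp_poly.
have e : forall j : nat, ((w%:P * 'X : S) ^+ j)`_i = w ^+ j * (i == j)%:R.
  by move=> j; rewrite exprMn -polyC_exp coefCM coefXn.
under eq_bigr => j _ do rewrite e.
case: (ltnP i (size p)) => hi.
  rewrite (bigD1 (Ordinal hi)) //= eqxx mulr1.
  rewrite big1 ?addr0; first by rewrite mulrC.
  move=> j /eqP hj; rewrite eq_sym.
  case: eqP => [hij|]; last by rewrite mulr0 mulr0.
  by case: hj; apply: val_inj.
rewrite nth_default // mulr0 big1 // => j _.
case: eqP => [hij|]; last by rewrite !mulr0.
by move: (ltn_ord j); rewrite -hij ltnNge hi.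
Qed.

Lemma scM w p q : sc w (p * q) = sc w p * sc w q.
Proof. exact: comp_polyM. Qed.
Lemma scD w p q : sc w (p + q) = sc w p + sc w q.
Proof. exact: comp_polyD. Qed.
Lemma scB w p q : sc w (p - q) = sc w p - sc w q.
Proof. exact: comp_polyB. Qed.
Lemma scC w c : sc w c%:P = c%:P.
Proof. exact: comp_polyC. Qed.
Lemma sc1 w : sc w 1 = 1.
Proof. by rewrite -polyC1 scC. Qed.
Lemma scX w : sc w 'X = w%:P * 'X.
Proof. exact: comp_polyX. Qed.

Lemma scXn w n : sc w ('X^n) = (w ^+ n)%:P * 'X^n.
Proof.
elim: n => [|n IH]; first by rewrite !expr0 sc1 polyC1 mul1r.
rewrite !exprS scM IH scX polyCM -!mulrA; congr (_ * _); exact: mulrCA.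
Qed.

Lemma eqm_sc N w p q : eqm N p q -> eqm N (sc w p) (sc w q).
Proof.
case=> r h; exists (sc w r * (w ^+ N)%:P).
by rewrite -scB h scM scXn mulrA.
Qed.

Lemma fact_inv n j : (j <= n)%N ->
  ((j`!)%:R : rat)^-1 * ((n - j)`!%:R)^-1 = ('C(n, j))%:R / (n`!)%:R.
Proof.
move=> hj; rewrite -(bin_fact hj) natrM invfM mulrA mulfV ?mul1r ?natrM ?invfM //.
by rewrite pnatr_eq0 -lt0n bin_gt0.
Qed.

Definition a (j : nat) : rat := bernoulli j / (j`!)%:R.
Definition bS N : S := \poly_(i < N) (a i)%:P.
Definition hS N : S := \poly_(i < N) ((((i.+1)`!)%:R)^-1 : rat)%:P.
Definition eS N : S := \poly_(i < N) ((((i`!)%:R)^-1 : rat))%:P.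
Definition cS N : S := \poly_(i < N) (a i.+1)%:P.

Lemma F1 N : eqm N (bS N * hS N) 1.
Proof.
apply: eqm_coef => i hi; rewrite coefM coef1.
under eq_bigr => j _ do rewrite !coef_poly (leq_ltn_trans (leq_ord j) hi)
   (leq_ltn_trans (leq_subr _ _) hi) -polyCM.
rewrite -raddf_sum; case: i hi => [|k] hk.
  rewrite big_ord1 /a bern0 subnn factS fact0 muln1 mulr1n div1r invr1.
  by rewrite eqxx mulr1n; exact: polyC1.
change ((\sum_(i < k.+2) a i / ((k.+1 - i).+1)`!%:R)%:P = 0).
rewrite -polyC0; congr (_%:P).
transitivity (((k.+2)`!%:R)^-1 *
  \sum_(j < k.+2) ('C(k.+2, j))%:R * bernoulli j); last first.
  by rewrite bern_rec mulr0.
rewrite mulr_sumr; apply: eq_bigr => j _.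
rewrite /a -subSn; last by rewrite -ltnS.
rewrite -mulrA fact_inv; last exact: ltnW.
ring.
Qed.

Lemma F2 N : eqm N (eS N) (1 + 'X * hS N).
Proof.
apply: eqm_coef => i hi; rewrite coefD coef1 coefXM !coef_poly hi.
case: i hi => [|k] hk /=; first by rewrite fact0 mulr1n invr1 addr0 polyC1.
by rewrite (ltnW hk) add0r.
Qed.

Lemma F3 N w1 w2 :
  eqm N (sc w1 (eS N) * sc w2 (eS N)) (sc (w1 + w2) (eS N)).
Proof.
apply: eqm_coef => i hi; rewrite coefM coef_sc coef_poly hi.
rewrite addrC exprDn mulr_suml; apply: eq_bigr => j _.
have hj : (j <= i)%N by rewrite -ltnS.
rewrite !coef_sc !coef_poly (leq_ltn_trans hj hi)
   (leq_ltn_trans (leq_subr _ _) hi).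
transitivity (w1 ^+ j * w2 ^+ (i - j) *
   (((j`!)%:R^-1 * ((i - j)`!%:R)^-1 : rat))%:P); first by rewrite polyCM; ring.
rewrite fact_inv // polyCM rmorph_nat.
have -> : forall x : R, x *+ 'C(i, j) = x * ('C(i, j))%:R.
  by move=> x; rewrite mulr_natr.
ring.
Qed.

Lemma sc1p (p : S) : sc 1 p = p.
Proof. by rewrite /sc mul1r comp_polyXr. Qed.

Lemma sc0e N : (0 < N)%N -> sc 0 (eS N) = 1.
Proof.
move=> hN; rewrite /sc mul0r comp_poly0r coef_poly hN /=.
by rewrite invr1.
Qed.

Lemma F4 N : eqm N (bS N) (1 + 'X * cS N).
Proof.
apply: eqm_coef => i hi; rewrite coefD coef1 coefXM !coef_poly hi.
case: i hi => [|k] hk /=.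
  by rewrite addr0 /a bern0 fact0 mulr1n divr1 polyC1.
by rewrite (ltnW hk) add0r.
Qed.

Definition qq (i : nat) : R := \sum_(j < i) ('X^j + (1 - 'X) ^+ j).

Lemma qid i : 1 - 'X ^+ i.+1 - (1 - 'X) ^+ i.+1 = 'X * (1 - 'X) * qq i :> R.
Proof.
elim: i => [|i IH].
  by rewrite /qq big_ord0 mulr0 !expr1 subrr.
rewrite /qq big_ord_recr /= -/(qq i) (mulrDr ('X * (1 - 'X))) -IH !exprS; ring.
Qed.

Definition QS N : S := \poly_(i < N) ((a i.+1)%:P * qq i).

Lemma F5 N : eqm N (cS N - ('X)%:P * sc 'X (cS N) - (1 - 'X)%:P * sc (1 - 'X) (cS N))
   (('X)%:P * (1 - 'X)%:P * QS N).
Proof.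
apply: eqm_coef => i hi.
rewrite -polyCM !coefB !coefCM !coef_sc !coef_poly hi.
rewrite (_ : 'X * (1 - 'X) * ((a i.+1)%:P * qq i) =
   (a i.+1)%:P * ('X * (1 - 'X) * qq i)); last by ring.
rewrite -qid !exprS; ring.
Qed.


Section Main.
Variable N : nat.
Hypothesis hN : (0 < N)%N.
Let t : R := 'X.
Let T : S := t%:P.
Let Sx : S := (1 - t)%:P.
Let b := bS N.
Let h := hS N.
Let e := eS N.
Let Bt := sc t b.
Let Bs := sc (1 - t) b.
Let Ht := sc t h.
Let Hs := sc (1 - t) h.
Let Et := sc t e.
Let Es := sc (1 - t) e.

Lemma TS : Sx = 1 - T.
Proof. by rewrite /Sx polyCB polyC1. Qed.

Definition PP := 'X * Bt * Bs - b * (T * Sx * 'X^2 + Sx * 'X * Bt + T * 'X * Bs).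

Lemma stepA : eqm N (PP * (Ht * Hs * h)) 0.
Proof.
have E1 : eqm N (b * h) 1 by exact: F1.
have E1t : eqm N (Bt * Ht) 1 by rewrite /Bt /Ht -scM -(sc1 t); apply: eqm_sc.
have E1s : eqm N (Bs * Hs) 1 by rewrite /Bs /Hs -scM -(sc1 (1 - t)); apply: eqm_sc.
have E2 : eqm N e (1 + 'X * h) by exact: F2.
have E2t : eqm N Et (1 + T * 'X * Ht).
  by rewrite /Et /T /Ht -scX -scM -(sc1 t) -scD; apply: eqm_sc.
have E2s : eqm N Es (1 + Sx * 'X * Hs).
  by rewrite /Es /Sx /Hs -scX -scM -(sc1 (1 - t)) -scD; apply: eqm_sc.
have E3 : eqm N (Et * Es) e.
  by have := F3 N t (1 - t); rewrite [t + _]addrC subrK sc1p.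
pose K := T * Sx * 'X^2 * Ht * Hs.
rewrite (_ : PP * (Ht * Hs * h) = 'X * (Bt * Ht) * (Bs * Hs) * h
   - (b * h) * (K + Sx * 'X * Hs * (Bt * Ht) + T * 'X * Ht * (Bs * Hs)));
   last by rewrite /PP /K; ring.
apply: (@eqm_trans N _ ('X * 1 * 1 * h - 1 * (K + Sx * 'X * Hs * 1 + T * 'X * Ht * 1))).
  eqm_cong.
rewrite (_ : 'X * 1 * 1 * h - 1 * (K + Sx * 'X * Hs * 1 + T * 'X * Ht * 1)
   = (1 + 'X * h) - 1 - K - Sx * 'X * Hs - T * 'X * Ht); last by ring.
have E2' := eqm_sym E2.
apply: (@eqm_trans N _ (e - 1 - K - Sx * 'X * Hs - T * 'X * Ht)).
  eqm_cong.
have E3' := eqm_sym E3.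
apply: (@eqm_trans N _ (Et * Es - 1 - K - Sx * 'X * Hs - T * 'X * Ht)).
  eqm_cong.
apply: (@eqm_trans N _ ((1 + T * 'X * Ht) * (1 + Sx * 'X * Hs) - 1 - K - Sx * 'X * Hs - T * 'X * Ht)).
  eqm_cong.
by apply: eqm_eq; rewrite /K; ring.
Qed.

Lemma stepA2 : eqm N PP 0.
Proof.
have E1 : eqm N 1 (b * h) by apply: eqm_sym; exact: F1.
have E1t : eqm N 1 (Bt * Ht).
  by apply: eqm_sym; rewrite /Bt /Ht -scM -(sc1 t); apply: eqm_sc; exact: F1.
have E1s : eqm N 1 (Bs * Hs).
  by apply: eqm_sym; rewrite /Bs /Hs -scM -(sc1 (1 - t)); apply: eqm_sc; exact: F1.
have A := stepA.
rewrite (_ : PP = PP * 1 * 1 * 1); last by ring.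
apply: (@eqm_trans N _ (PP * (Bt * Ht) * (Bs * Hs) * (b * h))).
  eqm_cong.
rewrite (_ : PP * (Bt * Ht) * (Bs * Hs) * (b * h) =
   (PP * (Ht * Hs * h)) * (Bt * Bs * b)); last by ring.
apply: (@eqm_trans N _ (0 * (Bt * Bs * b))).
  eqm_cong.
by apply: eqm_eq; ring.
Qed.

Let C := cS N.
Let Ct := sc t C.
Let Cs := sc (1 - t) C.
Let Q := QS N.
Definition DD := 'X * Ct * Cs - Q - b * (1 + Ct + Cs).

Lemma stepB : eqm N (T * Sx * 'X^2 * DD) 0.
Proof.
have E4 : eqm N b (1 + 'X * C) by exact: F4.
have E4t : eqm N (1 + T * 'X * Ct) Bt.
  apply: eqm_sym; rewrite /Bt /T /Ct -scX -scM -(sc1 t) -scD; apply: eqm_sc.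
  exact: F4.
have E4s : eqm N (1 + Sx * 'X * Cs) Bs.
  apply: eqm_sym; rewrite /Bs /Sx /Cs -scX -scM -(sc1 (1 - t)) -scD; apply: eqm_sc.
  exact: F4.
have E4' := eqm_sym E4.
have E5 : eqm N (T * Sx * Q) (C - T * Ct - Sx * Cs) by apply: eqm_sym; exact: F5.
have A := stepA2.
rewrite (_ : T * Sx * 'X^2 * DD = T * Sx * 'X^3 * Ct * Cs - 'X^2 * (T * Sx * Q)
   - T * Sx * 'X^2 * b * (1 + Ct + Cs)); last by rewrite /DD; ring.
apply: (@eqm_trans N _ (T * Sx * 'X^3 * Ct * Cs - 'X^2 * (C - T * Ct - Sx * Cs)
   - T * Sx * 'X^2 * (1 + 'X * C) * (1 + Ct + Cs))).
  eqm_cong.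
rewrite (_ : T * Sx * 'X^3 * Ct * Cs - 'X^2 * (C - T * Ct - Sx * Cs)
   - T * Sx * 'X^2 * (1 + 'X * C) * (1 + Ct + Cs) =
   'X * (1 + T * 'X * Ct) * (1 + Sx * 'X * Cs) - (1 + 'X * C) *
   (T * Sx * 'X^2 + Sx * 'X * (1 + T * 'X * Ct) + T * 'X * (1 + Sx * 'X * Cs)));
   last by rewrite TS; ring.
apply: (@eqm_trans N _ PP); last exact: A.
rewrite /PP; eqm_cong.
Qed.

End Main.

Definition Int (p : R) : rat := \sum_(i < size p) p`_i / (i.+1)%:R.

Lemma IntE M (p : R) : (size p <= M)%N -> Int p = \sum_(i < M) p`_i / (i.+1)%:R.
Proof.
move=> hM; rewrite /Int (big_ord_widen M (fun i => p`_i / (i.+1)%:R) hM).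
rewrite big_mkcond; apply: eq_bigr => i _.
case: ifP => // /negbT; rewrite -leqNgt => hi.
by rewrite nth_default // mul0r.
Qed.

Arguments IntE [M p] _.

Lemma IntD (p q : R) : Int (p + q) = Int p + Int q.
Proof.
set M := maxn (size p) (size q).
have hp : (size p <= M)%N by rewrite leq_maxl.
have hq : (size q <= M)%N by rewrite leq_maxr.
have hpq : (size (p + q)%R <= M)%N by apply: (leq_trans (size_polyD _ _)); rewrite geq_max hp hq.
rewrite (IntE hp) (IntE hq) (IntE hpq) -big_split; apply: eq_bigr => i _.
by rewrite coefD mulrDl.
Qed.

Lemma IntZ c (p : R) : Int (c%:P * p) = c * Int p.
Proof.
have hp : (size p <= size p)%N by [].
have hcp : (size (c%:P * p)%R <= size p)%N.
  by rewrite mul_polyC; apply: size_scale_leq.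
rewrite (IntE hp) (IntE hcp) mulr_sumr; apply: eq_bigr => i _.
by rewrite coefCM mulrA.
Qed.

Lemma Int0 : Int 0 = 0.
Proof. by rewrite /Int size_poly0 big_ord0. Qed.

Lemma IntN (p : R) : Int (- p) = - Int p.
Proof.
have -> : - p = (-1)%:P * p by rewrite polyCN polyC1 mulN1r.
by rewrite IntZ mulN1r.
Qed.

Lemma IntB (p q : R) : Int (p - q) = Int p - Int q.
Proof. by rewrite IntD IntN. Qed.

Lemma Int_sum n (F : nat -> R) :
  Int (\sum_(j < n) F j) = \sum_(j < n) Int (F j).
Proof.
elim: n => [|n IH]; first by rewrite !big_ord0 Int0.
by rewrite !big_ord_recr /= IntD IH.
Qed.

Lemma IntXn i : Int ('X^i) = (i.+1%:R)^-1.
Proof.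
rewrite /Int size_polyXn big_ord_recr /= big1 ?add0r.
  by rewrite coefXn eqxx div1r.
by move=> j _; rewrite coefXn (ltn_eqF (ltn_ord j)) mul0r.
Qed.

Lemma Beta j : forall i,
  Int ('X^i * (1 - 'X) ^+ j) = (i`!)%:R * (j`!)%:R / ((i + j).+1`!)%:R.
Proof.
elim: j => [|j IH] i.
  rewrite expr0 mulr1 IntXn addn0 fact0 mulr1 factS natrM.
  have h : ((i`!)%:R : rat) != 0 by rewrite pnatr_eq0 -lt0n fact_gt0.
  have h' : (1 + i%:R : rat) != 0 by rewrite -mulrS pnatr_eq0.
  by field; rewrite h h'.
rewrite [(1 - 'X) ^+ j.+1]exprS mulrCA mulrBl mul1r mulrA -exprS IntB !IH.
rewrite addnS addSn !factS !natrM.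
have h1 : ((i`!)%:R : rat) != 0 by rewrite pnatr_eq0 -lt0n fact_gt0.
have h2 : ((j`!)%:R : rat) != 0 by rewrite pnatr_eq0 -lt0n fact_gt0.
have h3 : (((i + j)`!)%:R : rat) != 0 by rewrite pnatr_eq0 -lt0n fact_gt0.
have h4 : ((i + j).+1%:R : rat) != 0 by rewrite pnatr_eq0.
have h5 : ((i + j).+2%:R : rat) != 0 by rewrite pnatr_eq0.
rewrite !mulrS natrD in h4 h5 *.
by field; rewrite h3 h4 h5.
Qed.

Lemma Int1mX k : Int ((1 - 'X) ^+ k) = ((k.+1)%:R)^-1.
Proof.
have := Beta k 0; rewrite expr0 mul1r => ->.
rewrite fact0 mul1r add0n factS natrM.
have h : ((k`!)%:R : rat) != 0 by rewrite pnatr_eq0 -lt0n fact_gt0.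
by rewrite invfM mulrCA mulfV // mulr1.
Qed.

Lemma Int_qq m : Int (qq m) = 2 * harmonic m.
Proof.
rewrite /qq (Int_sum m (fun j => 'X^j + (1 - 'X) ^+ j)).
rewrite /harmonic big_add1 /= big_mkord mulr_sumr.
by apply: eq_bigr => j _; rewrite IntD IntXn Int1mX; ring.
Qed.

Lemma Int_sumI n (F : 'I_n -> R) :
  Int (\sum_(j < n) F j) = \sum_(j < n) Int (F j).
Proof. exact: (big_morph Int IntD Int0). Qed.

Lemma DD0 p : (DD p.+4)`_p.+1 = 0.
Proof.
have := eqm_coefE _ _ _ p.+3 (stepB p.+4) (ltnSn _).
rewrite coef0 -polyCM -mulrA coefCM coefXnM /= => /eqP.
rewrite mulf_eq0 => /orP [|/eqP //].
rewrite mulf_eq0 polyX_eq0 /= => /eqP h; exfalso.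
have := congr1 (fun q : R => q`_1) h.
rewrite coefB coef1 coefX /= coef0 sub0r => /eqP.
by rewrite oppr_eq0 oner_eq0.
Qed.


Lemma keyL p :
  \sum_(j < p.+1) a j.+1 * a (p - j)%N.+1 * ((j`!)%:R * ((p - j)%N`!)%:R / ((p.+1)`!)%:R)
  = a p.+2 * (2 * harmonic p.+1) + \sum_(j < p.+2) a j *
      ((p.+1 - j == 0)%N%:R + a (p.+1 - j)%N.+1 * (2 / ((p.+1 - j)%N.+1)%:R)).
Proof.
have := congr1 Int (DD0 p); rewrite Int0 /DD /=.
set N := p.+4.
have cC : forall i, (i < N)%N -> (cS N)`_i = (a i.+1)%:P.
  by move=> i hi; rewrite coef_poly hi.
have cB : forall i, (i < N)%N -> (bS N)`_i = (a i)%:P.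
  by move=> i hi; rewrite coef_poly hi.
rewrite !coefB -mulrA coefXM /= coefM !IntB Int_sumI.
have hp1 : (p.+1 < N)%N by rewrite /N; lia.
rewrite coef_poly hp1 IntZ Int_qq coefM Int_sumI.
set S1 := \sum_(j < p.+1) _.
set S3 := \sum_(j < p.+2) _.
move=> H.
have -> : \sum_(j < p.+1) a j.+1 * a (p - j)%N.+1 *
   ((j`!)%:R * ((p - j)%N`!)%:R / ((p.+1)`!)%:R) = S1.
  apply: eq_bigr => j _.
  have hj : (j <= p)%N by rewrite -ltnS.
  rewrite !coef_sc !cC; last first.
  - by rewrite /N; lia.
  - by rewrite /N; lia.
  rewrite (_ : _ * _ = (a j.+1 * a (p - j)%N.+1)%:P * ('X^j * (1 - 'X) ^+ (p - j)%N));
    last by move: ('X ^+ j) ((1 - 'X) ^+ (p - j)%N) => u v; rewrite (polyCM (a j.+1)); ring.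
  by rewrite IntZ Beta subnKC.
have -> : \sum_(j < p.+2) a j *
      ((p.+1 - j == 0)%N%:R + a (p.+1 - j)%N.+1 * (2 / ((p.+1 - j)%N.+1)%:R)) = S3.
  apply: eq_bigr => j _.
  have hj : (j <= p.+1)%N by rewrite -ltnS.
  rewrite cB; last by rewrite /N; lia.
  rewrite !coefD coef1 !coef_sc !cC; last by rewrite /N; move: (nat_of_ord j) => k; lia.
  rewrite IntZ !IntD (_ : _ * (a _)%:P = (a (p.+1 - j)%N.+1)%:P * 'X^(p.+1 - j)%N);
    last by rewrite mulrC.
  rewrite (_ : _ * (a _)%:P = (a (p.+1 - j)%N.+1)%:P * (1 - 'X) ^+ (p.+1 - j)%N);
    last by rewrite mulrC.
  rewrite !IntZ IntXn Int1mX.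
  rewrite -addrA; congr (_ * (_ + _)); last by ring.
  case: (_ == _); first by rewrite /= -(expr0 'X) IntXn invr1.
  by rewrite /= Int0.
by apply/eqP; rewrite -subr_eq0 -H; apply/eqP; ring.
Qed.


Lemma eqm_mono N M p q : (M <= N)%N -> eqm N p q -> eqm M p q.
Proof.
move=> hMN [r hr]; exists (r * 'X^(N - M)).
by rewrite hr -mulrA -exprD subnK.
Qed.

Arguments eqm_mono [N M p q] _ _.

Lemma eqm_Xcancel N p q : eqm N.+1 ('X * p) ('X * q) -> eqm N p q.
Proof.
case=> r hr; exists r.
have hX : ('X : S) != 0 by rewrite polyX_eq0.
apply: (mulfI hX).
by rewrite mulrBr hr exprS mulrCA.
Qed.

Lemma odd_series N : eqm N (sc (-1) (bS N.+1)) (bS N.+1 + 'X).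
Proof.
set K := N.+1.
set b := bS K; set h := hS K; set e := eS K.
set Hm := sc (-1) h; set Em := sc (-1) e; set Bm := sc (-1) b.
have E2 : eqm K e (1 + 'X * h) by exact: F2.
have E2m : eqm K Em (1 + (-1)%:P * 'X * Hm).
  by rewrite /Em /Hm -scX -scM -(sc1 (-1)) -scD; apply: eqm_sc.
have E3 : eqm K (Em * e) 1.
  by have := F3 K (-1) 1; rewrite addNr sc0e // sc1p.
have E : eqm K ('X * (Hm * e)) ('X * h).
  have E2m' : eqm K (1 - Em) ('X * Hm).
    apply: (@eqm_trans K _ (1 - (1 + (-1)%:P * 'X * Hm))); first by eqm_cong.
    by apply: eqm_eq; rewrite polyCN polyC1; ring.
  rewrite (_ : 'X * (Hm * e) = ('X * Hm) * e); last by ring.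
  apply: (@eqm_trans K _ ((1 - Em) * e)); first by eqm_cong; exact: eqm_sym.
  rewrite (_ : (1 - Em) * e = e - Em * e); last by ring.
  apply: (@eqm_trans K _ (e - 1)); first by eqm_cong.
  apply: (@eqm_trans K _ ((1 + 'X * h) - 1)); first by eqm_cong.
  by apply: eqm_eq; ring.
have E' : eqm N (Hm * e) h by exact: eqm_Xcancel.
have F1K : eqm N (b * h) 1 by apply: (eqm_mono (leqnSn N)); exact: F1.
have F1m : eqm N (Bm * Hm) 1.
  apply: (eqm_mono (leqnSn N)).
  by rewrite /Bm /Hm -scM -(sc1 (-1)); apply: eqm_sc; exact: F1.
have E2N : eqm N e (1 + 'X * h) by exact: (eqm_mono (leqnSn N)).
have F1K' := eqm_sym F1K.
have E'' := eqm_sym E'.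
apply: (@eqm_trans N _ (Bm * (b * h))).
  rewrite -{1}(mulr1 Bm); eqm_cong.
apply: (@eqm_trans N _ (Bm * (b * (Hm * e)))); first by eqm_cong.
rewrite (_ : Bm * (b * (Hm * e)) = (Bm * Hm) * (b * e)); last by ring.
apply: (@eqm_trans N _ (1 * (b * (1 + 'X * h)))); first by eqm_cong.
rewrite (_ : 1 * (b * (1 + 'X * h)) = b + 'X * (b * h)); last by ring.
apply: (@eqm_trans N _ (b + 'X * 1)); first by eqm_cong.
by apply: eqm_eq; ring.
Qed.

Lemma bern_odd k : bernoulli (k.*2.+3) = 0.
Proof.
set i := k.*2.+3.
have := eqm_coefE _ _ _ i (odd_series i.+1) (ltnSn _).
rewrite coefD coef_sc coefX !coef_poly (_ : (i < i.+2)%N) //.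
have -> : (i == 1%N) = false by [].
rewrite addr0 -signr_odd /i /= odd_double /= expr1 mulN1r.
move/eqP; rewrite -subr_eq0 -opprD oppr_eq0 -polyCD polyC_eq0 -mulr2n mulrn_eq0 /=.
rewrite /a mulf_eq0 invr_eq0 pnatr_eq0 (negbTE (lt0n_neq0 (fact_gt0 _))) orbF.
by move/eqP.
Qed.

Lemma fnz n : ((n`!)%:R : rat) != 0.
Proof. by rewrite pnatr_eq0 -lt0n fact_gt0. Qed.
Lemma snz n : ((n.+1)%:R : rat) != 0.
Proof. by rewrite pnatr_eq0. Qed.

Lemma onz m : (1 + m%:R : rat) != 0.
Proof. by rewrite -mulrS snz. Qed.

Lemma bern_a k : bernoulli k = a k * (k`!)%:R.
Proof. by rewrite /a divfK // fnz. Qed.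

Section Miki.
Variable p : nat.
Let nn := p.+2.
Let F k := bernoulli k * bernoulli (nn - k) / (k%:R * (nn - k)%:R).
Let G k := a k * a (nn - k) / (nn - k)%:R.
Let c : rat := ((p.+1)`!)%:R.

Lemma stepL : \sum_(1 <= k < nn) F k =
  c * \sum_(j < p.+1) a j.+1 * a (p - j)%N.+1 * ((j`!)%:R * ((p - j)%N`!)%:R / ((p.+1)`!)%:R).
Proof.
rewrite /nn big_add1 /= big_mkord mulr_sumr; apply: eq_bigr => j _.
have hj : (j <= p)%N by rewrite -ltnS.
rewrite /F /c subSS subSn // !bern_a !factS !natrM.
by field; rewrite !onz !fnz.
Qed.

Lemma stepBin : \sum_(1 <= k < nn) F k * ('C(nn, k))%:R =
  2 * c * \sum_(1 <= k < nn) G k.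
Proof.
have rev : \sum_(1 <= k < nn) G (nn - k)%N = \sum_(1 <= k < nn) G k.
  by rewrite [RHS]big_nat_rev; apply: eq_bigr => k _; rewrite add1n subSS.
transitivity (c * \sum_(1 <= k < nn) (G k + G (nn - k)%N));
  last by rewrite big_split /= rev; ring.
rewrite /nn !big_add1 /= !big_mkord mulr_sumr; apply: eq_bigr => j _.
have hj : (j <= p)%N by rewrite -ltnS.
move: (nat_of_ord j) hj => {}j hj.
have hjle : (j.+1 <= p.+2)%N by lia.
have hC := bin_fact hjle.
have e1 : (p.+2 - j.+1 = (p - j).+1)%N by lia.
have e2 : (p.+2 - (p.+2 - j.+1) = j.+1)%N by lia.
rewrite /F /G e2 e1.
rewrite e1 in hC.
have hC' : (('C(p.+2, j.+1))%:R : rat) = ((p.+2)`!)%:R / (((j.+1)`!)%:R * (((p - j).+1)`!)%:R).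
  rewrite -hC natrM natrM mulfK //.
  by rewrite mulf_neq0 // fnz.
rewrite hC' /c !bern_a !factS !natrM.
have h5 : (1 + (p%:R - j%:R) : rat) != 0 by rewrite -natrB // -mulrS snz.
rewrite !mulrS natrB //.
by field; rewrite h5 !onz !fnz.
Qed.

Lemma stepR1 : \sum_(j < p.+2) a j * ((p.+1 - j == 0)%N%:R) = a p.+1.
Proof.
rewrite big_ord_recr /= subnn eqxx mulr1 big1 ?add0r // => j _.
have hj := ltn_ord j.
rewrite (_ : (p.+1 - widen_ord (leqnSn p.+1) j == 0)%N = false) ?mulr0 //.
by apply/negbTE; rewrite subn_eq0 -ltnNge.
Qed.

Lemma stepR2 : \sum_(j < p.+2) a j * (a (p.+1 - j)%N.+1 * (2 / ((p.+1 - j)%N.+1)%:R))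
  = 2 * (a nn / nn%:R + \sum_(1 <= k < nn) G k).
Proof.
rewrite big_ord_recl /= subn0 /nn big_add1 /= big_mkord mulrDr mulr_sumr.
congr (_ + _).
  by rewrite /a bern0 fact0 divr1 mul1r; ring.
apply: eq_bigr => j _.
have hj : (j <= p)%N by rewrite -ltnS.
rewrite /G /nn /bump /=.
move: (nat_of_ord j) hj => {}j hj.
rewrite add1n.
have e1 : (p.+1 - j.+1 = p - j)%N by lia.
have e2 : (p.+2 - j.+1 = (p - j).+1)%N by lia.
rewrite e1 e2; ring.
Qed.

Lemma miki : \sum_(1 <= k < nn) F k =
  \sum_(1 <= k < nn) F k * ('C(nn, k))%:R + bernoulli p.+1
  + 2 * bernoulli nn / nn%:R * harmonic nn.
Proof.
rewrite stepL keyL stepBin.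
have -> : \sum_(j < p.+2) a j * ((p.+1 - j == 0)%N%:R +
      a (p.+1 - j)%N.+1 * (2 / ((p.+1 - j)%N.+1)%:R)) =
  \sum_(j < p.+2) a j * ((p.+1 - j == 0)%N%:R) +
  \sum_(j < p.+2) a j * (a (p.+1 - j)%N.+1 * (2 / ((p.+1 - j)%N.+1)%:R)).
  by rewrite -big_split; apply: eq_bigr => j _; rewrite mulrDr.
rewrite stepR1 stepR2.
have hH : harmonic nn = harmonic p.+1 + (nn%:R)^-1.
  by rewrite /harmonic /nn big_nat_recr.
rewrite hH (bern_a nn) (bern_a p.+1) /c /nn (factS p.+1) natrM.
have h1 : (p.+2%:R : rat) != 0 by rewrite snz.
have h2 := fnz p.+1.
by field; rewrite -natrD pnatr_eq0.
Qed.

End Miki.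

Lemma sum_even n (f : nat -> rat) : (forall k, (k < n)%N -> f (2 * k).+1 = 0) ->
  \sum_(1 <= k < 2 * n) f k = \sum_(1 <= k < n) f (2 * k).
Proof.
elim: n => [|m IH] hf; first by rewrite !big_geq.
case: m IH hf => [|m] IH hf.
  by rewrite big_nat1 (hf 0%N) // big_geq.
rewrite (_ : (2 * m.+2 = (2 * m.+1).+2)%N); last by lia.
rewrite big_nat_recr /=; last by lia.
rewrite big_nat_recr /=; last by lia.
rewrite (big_nat_recr m.+1) /=; last by lia.
rewrite IH; last by move=> k hk; apply: hf; lia.
by rewrite (hf m.+1) // addr0.
Qed.

Theorem theorem1p2 (n : nat) (hn : (2 <= n)%N) :
  \sum_(1 <= k < n)
     bernoulli (2 * k) * bernoulli (2 * n - 2 * k)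
       / ((2 * k)%:R * (2 * n - 2 * k)%:R)
  = \sum_(1 <= k < n)
     bernoulli (2 * k) * bernoulli (2 * n - 2 * k)
       / ((2 * k)%:R * (2 * n - 2 * k)%:R) * ('C(2 * n, 2 * k))%:R
    + bernoulli (2 * n) / n%:R * harmonic (2 * n).
Proof.
have := miki (2 * n - 2).
have e : ((2 * n - 2).+2 = 2 * n)%N by lia.
rewrite e.
have hodd : forall k, (k < n)%N ->
   bernoulli (2 * k).+1 * bernoulli (2 * n - (2 * k).+1) = 0.
  move=> k hk; case: k hk => [|k] hk.
    have -> : (2 * n - (2 * 0).+1 = (n - 2).*2.+3)%N by lia.
    by rewrite bern_odd mulr0.
  have -> : ((2 * k.+1).+1 = k.*2.+3)%N by lia.
  by rewrite bern_odd mul0r.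
rewrite sum_even; last by move=> k hk; rewrite hodd // !mul0r.
rewrite sum_even; last by move=> k hk; rewrite hodd // !mul0r.
have -> : ((2 * n - 2).+1 = (n - 2).*2.+3)%N by lia.
rewrite bern_odd addr0 => ->.
congr (_ + _).
have hn0 : (n%:R : rat) != 0 by rewrite pnatr_eq0; lia.
rewrite natrM.
by field.
Qed.
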